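(* Let $\lambda>-1/2$, $\lambda\ne0$, $M,N\ge0$ integers, $a_0,\dots,a_M\in\mathbb{R}$, $a_{M+1}=a_{M+2}=0$, and $f_M(x)=\sum_{m=0}^M a_mC^{(\lambda)}_m(x)$. For $0\le n\le N$ and $y\in[-1,1]$ write $$\int_{-1}^{y}f_M(y-1-t)C^{(\lambda)}_n(t)\,\mathrm{d}t=\sum_{k=0}^{M+N+1}R^{(\lambda)}_{k,n}C^{(\lambda)}_k(y),$$ and set $R^{(\lambda)}_{k,-1}:=0$ for all $k$ and $R^{(\lambda)}_{M+N+2,n}:=0$. Then $$R^{(\lambda)}_{k,0}=\begin{cases}0,&k>M+1,\\[1mm] \dfrac{a_{k-1}}{2(k+\lambda-1)}-\dfrac{a_{k+1}}{2(k+\lambda+1)},&1\le k\le M+1,\\[2mm] \displaystyle\sum_{j=1}^{M+1}(-1)^{j+1}\frac{(2\lambda)_j}{j!}R^{(\lambda)}_{j,0},&k=0,\end{cases}$$ and for $0\le n\le N-1$ and $1\le k\le M+N$, $$R^{(\lambda)}_{k,n+1}=S^{(\lambda)}_nR^{(\lambda)}_{k,0}+R^{(\lambda)}_{k,n-1}+\frac{n+\lambda}{k+\lambda-1}R^{(\lambda)}_{k-1,n}-\frac{n+\lambda}{k+\lambda+1}R^{(\lambda)}_{k+1,n},$$ where $S^{(\lambda)}_n=\dfrac{2(-1)^{n+1}(\lambda+n)(2\lambda-1)_n}{(n+1)!}$.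
   Context: Gegenbauer polynomials $C^{(\lambda)}_n$ ($\lambda>-1/2$, $\lambda\ne0$) are defined by $C^{(\lambda)}_{-1}=0$, $C^{(\lambda)}_0=1$, $2(n+\lambda)xC^{(\lambda)}_n(x)=(n+1)C^{(\lambda)}_{n+1}(x)+(n+2\lambda-1)C^{(\lambda)}_{n-1}(x)$. $(a)_n$ is the Pochhammer symbol ($(a)_0=1$). The left-hand convolution is a polynomial of degree at most $M+n+1$, so $R^{(\lambda)}_{k,n}=0$ for $k>M+n+1$; $R^{(\lambda)}$ is the Gegenbauer convolution matrix of $f_M$. *)

(* Defs.v *)
From Stdlib Require Import Reals Arith Factorial.
From Coquelicot Require Import Coquelicot.
Open Scope R_scope.

Fixpoint poch (a : R) (n : nat) : R :=
  match n with
  | O => 1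
  | S m => poch a m * (a + INR m)
  end.

(* geg_pair lam n x = (C_{n-1}(x), C_n(x)), from C_{-1} = 0, C_0 = 1 and
   (n+1) C_{n+1} = 2(n+lam) x C_n - (n+2lam-1) C_{n-1}. *)
Fixpoint geg_pair (lam : R) (n : nat) (x : R) : R * R :=
  match n with
  | O => (0, 1)
  | S m => let (p, q) := geg_pair lam m x in
           (q, (2 * (INR m + lam) * x * q - (INR m + 2 * lam - 1) * p) / (INR m + 1))
  end.

Definition gegen (lam : R) (n : nat) (x : R) : R := snd (geg_pair lam n x).

Definition fM (lam : R) (M : nat) (a : nat -> R) (x : R) : R :=
  sum_f_R0 (fun m => a m * gegen lam m x) M.

Definition Scoef (lam : R) (n : nat) : R :=
  2 * (-1) ^ (S n) * (lam + INR n) * poch (2 * lam - 1) n / INR (fact (S n)).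

(* Main.v *)
Require Import Defs.
From Stdlib Require Import Reals Arith Factorial Lra Lia.
From Coquelicot Require Import Coquelicot.
Open Scope R_scope.

Lemma dplus (f g : R -> R) (x a b : R) : is_derive f x a -> is_derive g x b ->
  is_derive (fun t => f t + g t) x (a + b).
Proof. intros; now apply (is_derive_plus f g x a b). Qed.
Lemma dminus (f g : R -> R) (x a b : R) : is_derive f x a -> is_derive g x b ->
  is_derive (fun t => f t - g t) x (a - b).
Proof. intros; now apply (is_derive_minus f g x a b). Qed.
Lemma dmult (f g : R -> R) (x a b : R) : is_derive f x a -> is_derive g x b ->
  is_derive (fun t => f t * g t) x (a * g x + f x * b).
Proof. intros; apply (is_derive_mult f g x a b); auto. intros; apply Rmult_comm. Qed.
Lemma dconst (c x : R) : is_derive (fun _ => c) x 0.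
Proof. apply (is_derive_const c x). Qed.
Lemma did (x : R) : is_derive (fun t => t) x 1.
Proof. apply (is_derive_id x). Qed.
Lemma dcomp (f g : R -> R) (x a b : R) : is_derive f (g x) a -> is_derive g x b ->
  is_derive (fun t => f (g t)) x (b * a).
Proof. intros; now apply (is_derive_comp f g x a b). Qed.
Lemma dval (f : R -> R) (x a b : R) : is_derive f x a -> a = b -> is_derive f x b.
Proof. intros; subst; auto. Qed.

Lemma cplus (f g : R -> R) x : continuous f x -> continuous g x -> continuous (fun t => f t + g t) x.
Proof. intros; now apply (continuous_plus f g x). Qed.
Lemma cminus (f g : R -> R) x : continuous f x -> continuous g x -> continuous (fun t => f t - g t) x.
Proof. intros; now apply (continuous_minus f g x). Qed.
Lemma cmult (f g : R -> R) x : continuous f x -> continuous g x -> continuous (fun t => f t * g t) x.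
Proof. intros; now apply (continuous_mult f g x). Qed.
Lemma cconst (c x : R) : continuous (fun _ => c) x.
Proof. apply continuous_const. Qed.
Lemma cid (x : R) : continuous (fun t => t) x.
Proof. apply continuous_id. Qed.
Lemma ccomp (f g : R -> R) x : continuous g x -> continuous f (g x) -> continuous (fun t => f (g t)) x.
Proof. intros; now apply (continuous_comp g f x). Qed.
Lemma dext (f g : R -> R) (x l : R) : (forall t : R, f t = g t) -> is_derive f x l -> is_derive g x l.
Proof. intros; now apply (is_derive_ext f g x l). Qed.
Lemma dopp (f : R -> R) (x a : R) : is_derive f x a -> is_derive (fun t => - f t) x (- a).
Proof. intros; now apply (is_derive_opp f x a). Qed.
Definition gm1 (lam : R) (n : nat) (x : R) : R := fst (geg_pair lam n x).

Lemma geg_S lam n x : gegen lam (S n) x =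
  (2 * (INR n + lam) * x * gegen lam n x - (INR n + 2 * lam - 1) * gm1 lam n x) / (INR n + 1).
Proof. unfold gegen, gm1; simpl; destruct (geg_pair lam n x); reflexivity. Qed.
Lemma gm1_S lam n x : gm1 lam (S n) x = gegen lam n x.
Proof. unfold gegen, gm1; simpl; destruct (geg_pair lam n x); reflexivity. Qed.
Lemma gm1_0 lam x : gm1 lam 0 x = 0. Proof. reflexivity. Qed.
Lemma geg_0 lam x : gegen lam 0 x = 1. Proof. reflexivity. Qed.

Fixpoint dpair (lam : R) (n : nat) (x : R) : R * R :=
  match n with
  | O => (0, 0)
  | S m => let (p, q) := dpair lam m x in (q, p + 2 * (INR m + lam) * gegen lam m x)
  end.
Definition dg lam n x := snd (dpair lam n x).
Definition dm1 lam n x := fst (dpair lam n x).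
Lemma dg_S lam n x : dg lam (S n) x = dm1 lam n x + 2 * (INR n + lam) * gegen lam n x.
Proof. unfold dg, dm1; simpl; destruct (dpair lam n x); reflexivity. Qed.
Lemma dm1_S lam n x : dm1 lam (S n) x = dg lam n x.
Proof. unfold dg, dm1; simpl; destruct (dpair lam n x); reflexivity. Qed.
Lemma dm1_0 lam x : dm1 lam 0 x = 0. Proof. reflexivity. Qed.
Lemma dg_0 lam x : dg lam 0 x = 0. Proof. reflexivity. Qed.

Lemma INR_pos1 n : INR n + 1 <> 0.
Proof. pose proof (pos_INR n); lra. Qed.

Lemma identB lam n x : x * dg lam n x - dm1 lam n x = INR n * gegen lam n x
  /\ x * dg lam (S n) x - dm1 lam (S n) x = INR (S n) * gegen lam (S n) x.
Proof.
  induction n as [|n [IH1 IH2]].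
  - split.
    + rewrite dg_0, dm1_0; simpl; ring.
    + rewrite dg_S, dm1_S, dm1_0, dg_0, geg_S, gm1_0, geg_0; simpl. field.
  - split; [exact IH2|].
    rewrite dg_S, dm1_S, dm1_S, dg_S, (geg_S lam (S n)), gm1_S.
    assert (E: x * dg lam n x = INR n * gegen lam n x + dm1 lam n x) by lra.
    replace (x * (dg lam n x + 2 * (INR (S n) + lam) * gegen lam (S n) x))
      with (x * dg lam n x + 2 * (INR (S n) + lam) * x * gegen lam (S n) x) by ring.
    rewrite E.
    assert (H := INR_pos1 (S n)).
    rewrite !S_INR in *. field. exact H.
Qed.

Lemma geg_deriv2 lam n : forall x, is_derive (gegen lam n) x (dg lam n x)
  /\ is_derive (gegen lam (S n)) x (dg lam (S n) x).
Proof.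
  induction n as [|n IH]; intro x.
  - split.
    + apply dext with (fun _ => 1). { intro; reflexivity. }
      rewrite dg_0. apply dconst.
    + apply dext with (fun t => 2 * lam * t).
      { intro t; rewrite geg_S, geg_0, gm1_0; simpl; field. }
      rewrite dg_S, dm1_0, geg_0. simpl.
      apply dval with (a := 2 * lam * 1). apply is_derive_scal, did. ring.
  - split; [apply IH|].
    apply dext with (fun t => (2 * (INR (S n) + lam) * (t * gegen lam (S n) t)
        - (INR (S n) + 2 * lam - 1) * gegen lam n t) * / (INR (S n) + 1)).
    { intro t; rewrite (geg_S lam (S n)), gm1_S; unfold Rdiv; ring. }
    eapply dval.
    + apply dmult; [|apply dconst].
      apply dminus; apply is_derive_scal;
        [apply dmult; [apply did| apply (proj2 (IH x))] | apply (proj1 (IH x))].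
    + destruct (identB lam (S n) x) as [HB _].
      rewrite dm1_S in HB.
      rewrite (dg_S lam (S n)), dm1_S.
      assert (H := INR_pos1 (S n)).
      apply Rmult_eq_reg_r with (INR (S n) + 1); [|exact H].
      replace (x * dg lam (S n) x) with (INR (S n) * gegen lam (S n) x + dg lam n x) by lra.
      rewrite !S_INR in *. field. exact H.
Qed.

Lemma geg_deriv lam n x : is_derive (gegen lam n) x (dg lam n x).
Proof. apply geg_deriv2. Qed.
Lemma gm1_deriv lam n x : is_derive (gm1 lam n) x (dm1 lam n x).
Proof.
  destruct n.
  - apply dext with (fun _ => 0). { intro; reflexivity. } apply dconst.
  - apply dext with (gegen lam n). { intro; now rewrite gm1_S. }
    rewrite dm1_S; apply geg_deriv.
Qed.
Lemma geg_cont lam n x : continuous (gegen lam n) x.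
Proof. apply (@ex_derive_continuous R_AbsRing R_NormedModule). eexists; apply geg_deriv. Qed.
Lemma gm1_cont lam n x : continuous (gm1 lam n) x.
Proof. apply (@ex_derive_continuous R_AbsRing R_NormedModule). eexists; apply gm1_deriv. Qed.

Lemma poch_S a n : poch a (S n) = poch a n * (a + INR n).
Proof. reflexivity. Qed.
Lemma fact_S_INR n : INR (fact (S n)) = INR (S n) * INR (fact n).
Proof. rewrite fact_simpl, mult_INR; reflexivity. Qed.
Lemma pow_m1_S n : (-1) ^ (S n) = -1 * (-1) ^ n.
Proof. reflexivity. Qed.

Lemma geg_m1_2 lam n : gegen lam n (-1) = (-1) ^ n * poch (2 * lam) n / INR (fact n)
  /\ gegen lam (S n) (-1) = (-1) ^ (S n) * poch (2 * lam) (S n) / INR (fact (S n)).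
Proof.
  induction n as [|n [IH1 IH2]].
  - split.
    + rewrite geg_0; simpl; field.
    + rewrite geg_S, geg_0, gm1_0; simpl; field.
  - split; [exact IH2|].
    rewrite (geg_S lam (S n)), gm1_S, IH1, IH2.
    rewrite !poch_S, !fact_S_INR, !pow_m1_S.
    assert (H1 := INR_fact_neq_0 n).
    assert (H2 := INR_pos1 n). assert (H3 := INR_pos1 (S n)).
    rewrite !S_INR in *.
    field. repeat split; auto.
Qed.
Lemma geg_m1 lam n : gegen lam n (-1) = (-1) ^ n * poch (2 * lam) n / INR (fact n).
Proof. apply geg_m1_2. Qed.

Definition cval lam n := gegen lam (S n) (-1) - gm1 lam n (-1).

Lemma poch_shift a n : poch a (S n) = a * poch (a + 1) n.
Proof.
  induction n.
  - simpl; ring.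
  - rewrite poch_S, IHn, poch_S, S_INR; ring.
Qed.

Lemma cval_Scoef lam n : cval lam n = Scoef lam n.
Proof.
  unfold cval, Scoef. destruct n as [|m].
  - rewrite geg_m1, gm1_0. simpl. field.
  - rewrite gm1_S, !geg_m1.
    replace (2 * lam - 1) with (2 * lam - 1) by ring.
    rewrite (poch_shift (2 * lam - 1) m).
    replace (2 * lam - 1 + 1) with (2 * lam) by ring.
    rewrite !poch_S, !fact_S_INR, !pow_m1_S.
    assert (H1 := INR_fact_neq_0 m).
    assert (H2 := INR_pos1 m). assert (H3 := INR_pos1 (S m)).
    rewrite !S_INR in *.
    field. repeat split; auto.
Qed.

Definition gs lam (c : nat -> R) (B : nat) (y : R) := sum_f_R0 (fun k => c k * gegen lam k y) B.

Lemma sum_zero (g : nat -> R) N : (forall i, (i <= N)%nat -> g i = 0) -> sum_f_R0 g N = 0.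
Proof.
  induction N; intro H; simpl.
  - apply H; lia.
  - rewrite IHN, H; [ring|lia|]. intros; apply H; lia.
Qed.

Lemma sum_zero_tail (g : nat -> R) n p :
  (forall k, (n < k)%nat -> (k <= n + p)%nat -> g k = 0) -> sum_f_R0 g (n + p) = sum_f_R0 g n.
Proof.
  induction p; intro H.
  - now rewrite Nat.add_0_r.
  - rewrite Nat.add_succ_r, tech5, IHp, H; [ring|lia|lia|]. intros; apply H; lia.
Qed.

Lemma ind_sum (v : R) (g : nat -> R) K B : (K <= B)%nat ->
  sum_f_R0 (fun j => (if Nat.eqb j K then v else 0) * g j) B = v * g K.
Proof.
  induction B; intro HK.
  - assert (K = 0%nat) by lia; subst. simpl. reflexivity.
  - destruct (Nat.eq_dec K (S B)) as [->|Hne].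
    + rewrite tech5, Nat.eqb_refl, sum_zero; [ring|].
      intros i Hi. destruct (Nat.eqb_spec i (S B)); [lia|ring].
    + rewrite tech5, IHB; [|lia]. destruct (Nat.eqb_spec (S B) K); [lia|ring].
Qed.

Lemma gs_deriv lam c B y : is_derive (gs lam c B) y (sum_f_R0 (fun k => c k * dg lam k y) B).
Proof.
  induction B.
  - apply dext with (fun y => c 0%nat * gegen lam 0 y). { intro; reflexivity. }
    simpl. apply is_derive_scal, geg_deriv.
  - apply dext with (fun y => gs lam c B y + c (S B) * gegen lam (S B) y). { intro; reflexivity. }
    simpl. apply dplus; [apply IHB|]. apply is_derive_scal, geg_deriv.
Qed.

Lemma deriv_zero (g : R -> R) (y l : R) : (forall t, -1 < t < 1 -> g t = 0) -> -1 < y < 1 ->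
  is_derive g y l -> l = 0.
Proof.
  intros Hg Hy Hd.
  assert (H : is_derive (fun _ : R => 0) y l).
  { apply (is_derive_ext_loc g (fun _ => 0) y l); [|exact Hd].
    apply (locally_interval _ y (-1) 1); simpl; try lra.
    intros; apply Hg; lra. }
  apply is_derive_unique in H. rewrite <- H.
  apply is_derive_unique. apply dconst.
Qed.

Lemma lam_ne lam K : -1/2 < lam -> lam <> 0 -> INR K + lam <> 0.
Proof.
  intros H1 H2. destruct K; [simpl; lra|]. pose proof (pos_INR K); rewrite S_INR; lra.
Qed.

Lemma dsum_repr lam K : forall c : nat -> R, exists d : nat -> R,
  (forall y, sum_f_R0 (fun k => c k * dg lam k y) K = gs lam d K y)
  /\ (forall j, (K <= j)%nat -> d j = 0)
  /\ (forall K', K = S K' -> d K' = 2 * (INR K' + lam) * c K).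
Proof.
  induction K as [|K IH]; intro c.
  - exists (fun _ => 0). split; [|split].
    + intro y. unfold gs. simpl. rewrite dg_0. ring.
    + intros; reflexivity.
    + intros; discriminate.
  - set (c' := match K with O => c | S j0 => fun j => c j + (if Nat.eqb j j0 then c (S K) else 0) end).
    assert (Hc' : forall y, sum_f_R0 (fun k => c' k * dg lam k y) K
                       = sum_f_R0 (fun k => c k * dg lam k y) K + c (S K) * dm1 lam K y).
    { intro y. destruct K as [|K0].
      - unfold c'. simpl. rewrite dm1_0. ring.
      - unfold c'. rewrite dm1_S.
        rewrite (sum_eq _ (fun k => c k * dg lam k y + (if Nat.eqb k K0 then c (S (S K0)) else 0) * dg lam k y)).
        + rewrite plus_sum, ind_sum; [ring|lia].
        + intros; ring. }
    destruct (IH c') as [d' [Hd1 [Hd2 Hd3]]].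
    exists (fun j => d' j + (if Nat.eqb j K then 2 * (INR K + lam) * c (S K) else 0)).
    split; [|split].
    + intro y. unfold gs.
      rewrite (sum_eq (fun k => (d' k + (if Nat.eqb k K then 2 * (INR K + lam) * c (S K) else 0)) * gegen lam k y) (fun k => d' k * gegen lam k y + (if Nat.eqb k K then 2 * (INR K + lam) * c (S K) else 0) * gegen lam k y)).
      2: (intros; ring).
      rewrite plus_sum, ind_sum; [|lia].
      rewrite tech5, (tech5 (fun k => d' k * gegen lam k y)).
      rewrite Hd2; [|lia].
      fold (gs lam d' K y). rewrite <- Hd1. rewrite Hc', dg_S. ring.
    + intros j Hj. rewrite Hd2; [|lia]. destruct (Nat.eqb_spec j K); [lia|ring].
    + intros K' HK. injection HK as ->. rewrite Hd2, Nat.eqb_refl; [ring|lia].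
Qed.

Lemma LI_top lam (Hl1 : -1/2 < lam) (Hl2 : lam <> 0) K : forall c,
  (forall y, -1 < y < 1 -> gs lam c K y = 0) -> c K = 0.
Proof.
  induction K as [|K IH]; intros c H.
  - specialize (H 0 ltac:(lra)). unfold gs in H. simpl in H. rewrite geg_0 in H. lra.
  - destruct (dsum_repr lam (S K) c) as [d [Hd1 [Hd2 Hd3]]].
    assert (Hz : forall y, -1 < y < 1 -> gs lam d K y = 0).
    { intros y Hy. apply (deriv_zero (gs lam c (S K)) y); auto.
      assert (E : gs lam d K y = gs lam d (S K) y).
      { unfold gs. rewrite tech5, Hd2; [ring|lia]. }
      rewrite E, <- Hd1. apply gs_deriv. }
    specialize (IH d Hz). rewrite Hd3 in IH; [|reflexivity].
    assert (Hn := lam_ne lam K Hl1 Hl2).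
    apply Rmult_integral in IH. destruct IH as [IH|IH]; [|exact IH].
    exfalso. apply Hn. lra.
Qed.

Lemma LI_all lam (Hl1 : -1/2 < lam) (Hl2 : lam <> 0) K : forall c,
  (forall y, -1 <= y <= 1 -> gs lam c K y = 0) -> forall k, (k <= K)%nat -> c k = 0.
Proof.
  induction K as [|K IH]; intros c H k Hk.
  - assert (k = 0%nat) by lia; subst. apply (LI_top lam Hl1 Hl2 0). intros; apply H; lra.
  - assert (Htop : c (S K) = 0).
    { apply (LI_top lam Hl1 Hl2 (S K)). intros; apply H; lra. }
    destruct (Nat.eq_dec k (S K)) as [->|Hne]; [exact Htop|].
    apply IH; [|lia]. intros y Hy. rewrite <- (H y Hy). unfold gs. rewrite tech5, Htop. ring.
Qed.

Definition Ew lam m s := gegen lam (S m) s - gm1 lam m s - cval lam m.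
Lemma Ew_deriv lam m x : is_derive (Ew lam m) x (2 * (INR m + lam) * gegen lam m x).
Proof.
  unfold Ew. eapply dval.
  - apply dminus; [apply dminus; [apply geg_deriv|apply gm1_deriv]|apply dconst].
  - rewrite dg_S. ring.
Qed.
Lemma Ew_m1 lam m : Ew lam m (-1) = 0.
Proof. unfold Ew, cval; ring. Qed.

Definition SE lam (b : nat -> R) B y := sum_f_R0 (fun m => b m * Ew lam m y) B.
Lemma SE_deriv lam b B y : is_derive (SE lam b B) y
  (sum_f_R0 (fun m => b m * (2 * (INR m + lam) * gegen lam m y)) B).
Proof.
  induction B.
  - apply dext with (fun y => b 0%nat * Ew lam 0 y). { intro; reflexivity. }
    simpl. apply is_derive_scal, Ew_deriv.
  - apply dext with (fun y => SE lam b B y + b (S B) * Ew lam (S B) y). { intro; reflexivity. }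
    simpl. apply dplus; [apply IHB|]. apply is_derive_scal, Ew_deriv.
Qed.
Lemma SE_m1 lam b B : SE lam b B (-1) = 0.
Proof. unfold SE. apply sum_zero. intros; rewrite Ew_m1; ring. Qed.
Lemma SE_cont lam b B y : continuous (SE lam b B) y.
Proof. apply (@ex_derive_continuous R_AbsRing R_NormedModule). eexists; apply SE_deriv. Qed.
Lemma gs_cont lam c B y : continuous (gs lam c B) y.
Proof. apply (@ex_derive_continuous R_AbsRing R_NormedModule). eexists; apply gs_deriv. Qed.

Lemma SE_expand lam b B y : SE lam b B y =
  gs lam (fun k => (match k with O => 0 | S j => if Nat.leb j B then b j else 0 end)
                   - (if Nat.leb (S k) B then b (S k) else 0)) (S B) y
  - sum_f_R0 (fun m => b m * cval lam m) B.
Proof.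
  unfold SE, gs, Ew.
  rewrite (sum_eq (fun m => b m * (gegen lam (S m) y - gm1 lam m y - cval lam m))
                  (fun m => (b m * gegen lam (S m) y - b m * gm1 lam m y) - b m * cval lam m)).
  2: intros; ring.
  rewrite minus_sum, minus_sum.
  rewrite (sum_eq (fun k => ((match k with O => 0 | S j => if Nat.leb j B then b j else 0 end)
                   - (if Nat.leb (S k) B then b (S k) else 0)) * gegen lam k y)
                  (fun k => (match k with O => 0 | S j => if Nat.leb j B then b j else 0 end) * gegen lam k y
                   - (if Nat.leb (S k) B then b (S k) else 0) * gegen lam k y)).
  2: intros; ring.
  rewrite minus_sum.
  assert (P1 : sum_f_R0 (fun k => (match k with O => 0 | S j => if Nat.leb j B then b j else 0 end) * gegen lam k y) (S B)
             = sum_f_R0 (fun m => b m * gegen lam (S m) y) B).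
  { rewrite decomp_sum; [|lia]. simpl pred. rewrite Rmult_0_l, Rplus_0_l.
    apply sum_eq. intros i Hi. replace (Nat.leb i B) with true; [reflexivity|].
    symmetry; apply Nat.leb_le; lia. }
  assert (P2 : sum_f_R0 (fun k => (if Nat.leb (S k) B then b (S k) else 0) * gegen lam k y) (S B)
             = sum_f_R0 (fun m => b m * gm1 lam m y) B).
  { destruct B as [|B'].
    - simpl. rewrite gm1_0. ring.
    - rewrite (decomp_sum (fun m => b m * gm1 lam m y)); [|lia]. simpl pred.
      rewrite gm1_0, Rmult_0_r, Rplus_0_l.
      replace (S (S B')) with (B' + 2)%nat by lia.
      rewrite sum_zero_tail.
      + apply sum_eq. intros i Hi. rewrite gm1_S.
        replace (Nat.leb (S i) (S B')) with true; [reflexivity|].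
        symmetry; apply Nat.leb_le; lia.
      + intros k H1 H2. replace (Nat.leb (S k) (S B')) with false; [ring|].
        symmetry; apply Nat.leb_gt; lia. }
  rewrite P1, P2. ring.
Qed.

Lemma ex_cont (f : R -> R) (a b : R) : (forall x, continuous f x) -> ex_RInt f a b.
Proof. intros H. apply (@ex_RInt_continuous R_CompleteNormedModule). intros; apply H. Qed.
Lemma rint_minus (f g : R -> R) (a b : R) : ex_RInt f a b -> ex_RInt g a b ->
  @eq R (RInt (fun x => f x - g x) a b) (RInt f a b - RInt g a b).
Proof. intros. apply (@RInt_minus R_CompleteNormedModule); auto. Qed.
Lemma rint_plus (f g : R -> R) (a b : R) : ex_RInt f a b -> ex_RInt g a b ->
  @eq R (RInt (fun x => f x + g x) a b) (RInt f a b + RInt g a b).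
Proof. intros. apply (@RInt_plus R_CompleteNormedModule); auto. Qed.
Lemma rint_scal (f : R -> R) (a b k : R) : ex_RInt f a b ->
  @eq R (RInt (fun x => k * f x) a b) (k * RInt f a b).
Proof. intros. apply (@RInt_scal R_CompleteNormedModule); auto. Qed.
Lemma rint_ext (f g : R -> R) (a b : R) : (forall x, f x = g x) -> @eq R (RInt f a b) (RInt g a b).
Proof. intros. apply (@RInt_ext R_CompleteNormedModule); auto. Qed.
Lemma rint_point (f : R -> R) (a : R) : @eq R (RInt f a a) 0.
Proof. apply (@RInt_point R_CompleteNormedModule). Qed.
Lemma ftc (f df : R -> R) (a b : R) : (forall x, is_derive f x (df x)) -> (forall x, continuous df x) ->
  @eq R (RInt df a b) (f b - f a).
Proof.
  intros H1 H2. apply (@is_RInt_unique R_CompleteNormedModule).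
  apply (@is_RInt_derive R_CompleteNormedModule); intros; auto.
Qed.

Lemma cont_pt (f : R -> R) x : continuous f x -> continuity_pt f x.
Proof. intro H. apply continuity_pt_filterlim. exact H. Qed.

Lemma cont_conv (phi psi : R -> R) (y : R) : (forall x, continuous phi x) -> (forall x, continuous psi x) ->
  forall t, continuous (fun t => phi (y - 1 - t) * psi t) t.
Proof.
  intros H1 H2 t. apply cmult; [|apply H2].
  apply (ccomp phi (fun t => y - 1 - t)); [|apply H1].
  apply cminus; [apply cconst|apply cid].
Qed.

Lemma leib (phi dphi psi : R -> R) (Hd : forall x, is_derive phi x (dphi x))
  (Hc : forall x, continuous dphi x) (Hp : forall x, continuous psi x) (y : R) :
  is_derive (fun y => RInt (fun t => phi (y - 1 - t) * psi t) (-1) y) y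
    (RInt (fun t => dphi (y - 1 - t) * psi t) (-1) y + phi (-1) * psi y).
Proof.
  assert (Hpc : forall x, continuous phi x).
  { intro x. apply (@ex_derive_continuous R_AbsRing R_NormedModule). eexists; apply Hd. }
  assert (Hdu : forall u t, is_derive (fun u => phi (u - 1 - t) * psi t) u (dphi (u - 1 - t) * psi t)).
  { intros u t. eapply dval.
    - apply dmult; [|apply dconst].
      apply (dcomp phi (fun u => u - 1 - t)); [apply Hd|].
      apply dminus; [apply dminus; [apply did|apply dconst]|apply dconst].
    - cbv beta; ring. }
  assert (HD : forall u t, Derive (fun z => phi (z - 1 - t) * psi t) u = dphi (u - 1 - t) * psi t).
  { intros; apply is_derive_unique, Hdu. }
  assert (HC2 : forall u v, continuity_2d_pt (fun u v => Derive (fun z => phi (z - 1 - v) * psi v) u) u v).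
  { intros u v.
    apply continuity_2d_pt_ext with (fun u v => dphi (u - 1 - v) * psi v).
    { intros; symmetry; apply HD. }
    apply continuity_2d_pt_mult.
    - apply (continuity_1d_2d_pt_comp dphi (fun u v => u - 1 - v)).
      + apply cont_pt, Hc.
      + apply continuity_2d_pt_minus; [apply continuity_2d_pt_minus|].
        * apply continuity_2d_pt_id1.
        * apply continuity_2d_pt_const.
        * apply continuity_2d_pt_id2.
    - apply (continuity_1d_2d_pt_comp psi (fun u v => v)).
      + apply cont_pt, Hp.
      + apply continuity_2d_pt_id2. }
  assert (HI : forall z a b, ex_RInt (fun t => phi (z - 1 - t) * psi t) a b).
  { intros; apply ex_cont, cont_conv; auto. }
  pose proof (is_derive_RInt_param_bound_comp (fun z t => phi (z - 1 - t) * psi t)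
     (fun _ => -1) (fun z => z) y 0 1) as K.
  simpl in K.
  eapply dval; [apply K|].
  - apply filter_forall; intros; apply HI.
  - exists (mkposreal 1 Rlt_0_1). apply filter_forall; intros; apply HI.
  - exists (mkposreal 1 Rlt_0_1). apply filter_forall; intros; apply HI.
  - apply dconst.
  - apply did.
  - exists (mkposreal 1 Rlt_0_1). apply filter_forall; intros. eexists; apply Hdu.
  - intros; apply HC2.
  - exists (mkposreal 1 Rlt_0_1). intros; apply HC2.
  - exists (mkposreal 1 Rlt_0_1). intros; apply HC2.
  - apply cont_pt, cont_conv; auto.
  - apply cont_pt, cont_conv; auto.
  - rewrite (rint_ext _ (fun t => dphi (y - 1 - t) * psi t)); [|intros; apply HD].
    replace (y - 1 - y) with (-1) by ring. ring.
Qed.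

Definition Fa lam M (a : nat -> R) := SE lam (fun m => a m / (2 * (INR m + lam))) M.

Lemma fM_cont lam M a x : continuous (fM lam M a) x.
Proof. exact (gs_cont lam a M x). Qed.

Lemma Fa_deriv lam M a (Hl1 : -1/2 < lam) (Hl2 : lam <> 0) (x : R) :
  is_derive (Fa lam M a) x (fM lam M a x).
Proof.
  eapply dval; [apply SE_deriv|]. unfold fM. apply sum_eq. intros i _.
  assert (H := lam_ne lam i Hl1 Hl2). field. exact H.
Qed.
Lemma Fa_m1 lam M a : Fa lam M a (-1) = 0.
Proof. apply SE_m1. Qed.
Lemma Fa_cont lam M a x : continuous (Fa lam M a) x.
Proof. apply SE_cont. Qed.
Lemma Ew_cont lam m x : continuous (Ew lam m) x.
Proof. apply (@ex_derive_continuous R_AbsRing R_NormedModule). eexists; apply Ew_deriv. Qed.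

Lemma I0_formula lam M a (Hl1 : -1/2 < lam) (Hl2 : lam <> 0) (y : R) :
  @eq R (RInt (fun t => fM lam M a (y - 1 - t) * gegen lam 0 t) (-1) y) (Fa lam M a y).
Proof.
  rewrite (ftc (fun t => - Fa lam M a (y - 1 - t))).
  -     replace (y - 1 - y) with (-1) by ring. replace (y - 1 - -1) with y by ring.
    rewrite Fa_m1. ring.
  - intro t. eapply dval.
    + apply dopp. apply (dcomp (Fa lam M a) (fun t => y - 1 - t)).
      * apply Fa_deriv; auto.
      * apply dminus; [apply dconst|apply did].
    + cbv beta; rewrite geg_0. ring.
  - intro t. apply cont_conv; [apply fM_cont|apply geg_cont].
Qed.

Lemma conv_step lam M a (Hl1 : -1/2 < lam) (Hl2 : lam <> 0) n (y : R) :
  @eq R (RInt (fun t => fM lam M a (y - 1 - t) * Ew lam n t) (-1) y)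
  (2 * (INR n + lam) * RInt (fun t => Fa lam M a (y - 1 - t) * gegen lam n t) (-1) y).
Proof.
  assert (Hz : @eq R (RInt (fun t => fM lam M a (y - 1 - t) * Ew lam n t
                 - 2 * (INR n + lam) * (Fa lam M a (y - 1 - t) * gegen lam n t)) (-1) y) 0).
  { rewrite (ftc (fun t => - (Fa lam M a (y - 1 - t) * Ew lam n t))).
    - replace (y - 1 - y) with (-1) by ring. rewrite Fa_m1, Ew_m1. ring.
    - intro t. eapply dval.
      + apply dopp. apply dmult; [|apply Ew_deriv].
        apply (dcomp (Fa lam M a) (fun t => y - 1 - t)).
        * apply Fa_deriv; auto.
        * apply dminus; [apply dconst|apply did].
      + cbv beta; ring.
    - intro t. apply cminus.
      + apply cont_conv; [apply fM_cont|apply Ew_cont].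
      + apply (cmult (fun _ => 2 * (INR n + lam))); [apply cconst|].
        apply cont_conv; [apply Fa_cont|apply geg_cont]. }
  rewrite rint_minus, rint_scal in Hz.
  - lra.
  - apply ex_cont, cont_conv; [apply Fa_cont|apply geg_cont].
  - apply ex_cont, cont_conv; [apply fM_cont|apply Ew_cont].
  - apply ex_cont. intro t.
    apply (cmult (fun _ => 2 * (INR n + lam))); [apply cconst|].
    apply cont_conv; [apply Fa_cont|apply geg_cont].
Qed.

Lemma H_eq lam M a (Hl1 : -1/2 < lam) (Hl2 : lam <> 0) n B (Rcn : nat -> R)
  (Hn : forall t, -1 <= t <= 1 ->
     RInt (fun s => fM lam M a (t - 1 - s) * gegen lam n s) (-1) t = gs lam Rcn B t)
  (y : R) (Hy : -1 <= y <= 1) :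
  @eq R (RInt (fun t => Fa lam M a (y - 1 - t) * gegen lam n t) (-1) y)
  (SE lam (fun k => Rcn k / (2 * (INR k + lam))) B y).
Proof.
  destruct (Req_dec y (-1)) as [->|Hne].
  { rewrite rint_point, SE_m1. reflexivity. }
  set (h := fun z : R => (RInt (fun t => Fa lam M a (z - 1 - t) * gegen lam n t) (-1) z : R)
                     - SE lam (fun k => Rcn k / (2 * (INR k + lam))) B z).
  assert (Hd : forall t, -1 <= t <= y -> is_derive h t 0).
  { intros t Ht. unfold h. eapply dval.
    - apply dminus; [apply (leib (Fa lam M a) (fM lam M a) (gegen lam n))|apply SE_deriv].
      + intro; apply Fa_deriv; auto.
      + apply fM_cont.
      + apply geg_cont.
    - rewrite Fa_m1, Hn; [|lra]. unfold gs.
      rewrite Rmult_0_l, Rplus_0_r. rewrite <- minus_sum. apply sum_zero.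
      intros i _. assert (H := lam_ne lam i Hl1 Hl2). field. exact H. }
  assert (E : h (-1) = h y).
  { apply (eq_is_derive h (-1) y); [|lra]. intros t Ht. apply Hd. exact Ht. }
  unfold h in E. rewrite rint_point, SE_m1 in E. lra.
Qed.

Lemma gs_minus lam (c1 c2 : nat -> R) B y :
  gs lam (fun k => c1 k - c2 k) B y = gs lam c1 B y - gs lam c2 B y.
Proof. unfold gs. rewrite <- minus_sum. apply sum_eq; intros; ring. Qed.
Lemma gs_scal lam (v : R) (c : nat -> R) B y :
  gs lam (fun k => v * c k) B y = v * gs lam c B y.
Proof. unfold gs. rewrite scal_sum. apply sum_eq; intros; ring. Qed.
Lemma gs_plus_ind lam (c : nat -> R) (v : R) B y :
  gs lam (fun k => c k + (if Nat.eqb k 0 then v else 0)) B y = gs lam c B y + v.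
Proof.
  unfold gs.
  rewrite (sum_eq _ (fun k => c k * gegen lam k y + (if Nat.eqb k 0 then v else 0) * gegen lam k y)).
  - rewrite plus_sum, ind_sum; [|lia]. rewrite geg_0. ring.
  - intros; ring.
Qed.
Lemma gs_ext_bound lam (c : nat -> R) n p y :
  (forall k, (n < k)%nat -> (k <= n + p)%nat -> c k = 0) -> gs lam c (n + p) y = gs lam c n y.
Proof. intros H. unfold gs. apply sum_zero_tail. intros k H1 H2. rewrite H; auto. ring. Qed.
Lemma gs_ext_S lam (c : nat -> R) B y : c (S B) = 0 -> gs lam c (S B) y = gs lam c B y.
Proof. intros H. unfold gs. rewrite tech5, H. ring. Qed.

Definition cf (b : nat -> R) (B : nat) (k : nat) : R :=
  (match k with O => 0 | S j => if Nat.leb j B then b j else 0 end)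
  - (if Nat.leb (S k) B then b (S k) else 0).

Lemma SE_expand' lam b B y : SE lam b B y =
  gs lam (cf b B) (S B) y - sum_f_R0 (fun m => b m * cval lam m) B.
Proof. apply SE_expand. Qed.

Lemma leb_t i j : (i <= j)%nat -> Nat.leb i j = true.
Proof. apply Nat.leb_le. Qed.
Lemma leb_f i j : (j < i)%nat -> Nat.leb i j = false.
Proof. apply Nat.leb_gt. Qed.

Theorem theorem4p3 (lam : R) (M N : nat) (a : nat -> R) (Rc : nat -> nat -> R)
  (Hlam : -1/2 < lam) (Hlam0 : lam <> 0)
  (Ha1 : a (S M) = 0) (Ha2 : a (S (S M)) = 0)
  (Hexp : forall n : nat, (n <= N)%nat -> forall y : R, -1 <= y <= 1 ->
     RInt (fun t => fM lam M a (y - 1 - t) * gegen lam n t) (-1) y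
     = sum_f_R0 (fun k => Rc k n * gegen lam k y) (M + N + 1))
  (Hzero : forall n k : nat, (n <= N)%nat -> (M + N + 1 < k)%nat -> Rc k n = 0) :
  (forall k : nat, (M + 1 < k)%nat -> Rc k O = 0)
  /\ (forall k : nat, (1 <= k <= M + 1)%nat ->
        Rc k O = a (k - 1)%nat / (2 * (INR k + lam - 1))
                 - a (k + 1)%nat / (2 * (INR k + lam + 1)))
  /\ Rc O O = sum_f_R0 (fun i => let j := S i in
                 (-1) ^ (S j) * poch (2 * lam) j / INR (fact j) * Rc j O) M
  /\ (forall n k : nat, (n + 1 <= N)%nat -> (1 <= k <= M + N)%nat ->
        Rc k (S n) = Scoef lam n * Rc k O
                     + (match n with O => 0 | S m => Rc k m end)
                     + (INR n + lam) / (INR k + lam - 1) * Rc (k - 1)%nat n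
                     - (INR n + lam) / (INR k + lam + 1) * Rc (k + 1)%nat n).
Proof.
  pose (b0 := fun m => a m / (2 * (INR m + lam))).
  assert (Hs0 : forall k, (1 <= k)%nat -> (k <= M + N + 1)%nat -> Rc k 0%nat = cf b0 M k).
  { intros k Hk1 Hk2.
    pose (K0 := sum_f_R0 (fun m => b0 m * cval lam m) M).
    assert (H0 : forall y, -1 <= y <= 1 ->
       gs lam (fun k => (Rc k 0%nat - cf b0 M k) + (if Nat.eqb k 0 then K0 else 0)) (M + N + 1) y = 0).
    { intros y Hy.
      pose proof (Hexp 0%nat (Nat.le_0_l N) y Hy) as E.
      rewrite I0_formula in E by auto.
      change (sum_f_R0 (fun k => Rc k 0%nat * gegen lam k y) (M + N + 1))
        with (gs lam (fun k => Rc k 0%nat) (M + N + 1) y) in E.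
      unfold Fa in E. rewrite SE_expand' in E. fold b0 in E.
      rewrite gs_plus_ind, gs_minus.
      replace (M + N + 1)%nat with (S M + N)%nat in E |- * by lia.
      rewrite (gs_ext_bound lam (cf b0 M) (S M) N).
      - unfold K0, b0 in *. match type of E with ?x = ?z => assert (E' : @eq R x z) by exact E end. clear E. lra.
      - intros k0 H1 H2. unfold cf. destruct k0 as [|j]; [lia|].
        rewrite leb_f, leb_f by lia. ring. }
    pose proof (LI_all lam Hlam Hlam0 (M + N + 1) _ H0 k Hk2) as HL.
    destruct k as [|k]; [lia|]. cbv beta in HL.
    replace (Nat.eqb (S k) 0) with false in HL by reflexivity. lra. }
  assert (C1 : forall k : nat, (M + 1 < k)%nat -> Rc k O = 0).
  { intros k Hk. destruct (le_lt_dec k (M + N + 1)) as [Hle|Hlt].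
    - rewrite Hs0 by lia. unfold cf. destruct k as [|j]; [lia|].
      rewrite leb_f, leb_f by lia. ring.
    - apply Hzero; lia. }
  split; [exact C1|]. split.
  { intros k [Hk1 Hk2]. rewrite Hs0 by lia. destruct k as [|j]; [lia|].
    unfold cf, b0. rewrite leb_t by lia.
    replace (S j - 1)%nat with j by lia. replace (S j + 1)%nat with (S (S j)) by lia.
    replace (INR (S j) + lam - 1) with (INR j + lam) by (rewrite S_INR; ring).
    replace (INR (S j) + lam + 1) with (INR (S (S j)) + lam) by (rewrite !S_INR; ring).
    destruct (Nat.leb (S (S j)) M) eqn:E; [reflexivity|].
    apply Nat.leb_gt in E.
    assert (Ha : a (S (S j)) = 0).
    { destruct (Nat.eq_dec (S (S j)) (S M)) as [e|e]; [rewrite e; exact Ha1|].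
      replace (S (S j)) with (S (S M)) by lia. exact Ha2. }
    rewrite Ha. unfold Rdiv. ring. }
  split.
  { pose proof (Hexp 0%nat (Nat.le_0_l N) (-1) ltac:(lra)) as E.
    rewrite rint_point in E.
    rewrite decomp_sum in E by lia. cbv beta in E. rewrite geg_0 in E.
    replace (pred (M + N + 1)) with (M + N)%nat in E by lia.
    rewrite sum_zero_tail in E.
    2: { intros k H1 H2. rewrite C1 by lia. ring. }
    match goal with |- _ = sum_f_R0 ?T M =>
      assert (HT : sum_f_R0 T M + sum_f_R0 (fun i => Rc (S i) 0%nat * gegen lam (S i) (-1)) M = 0) end.
    { rewrite <- plus_sum. apply sum_zero. intros i _. cbv zeta beta.
      rewrite geg_m1, !pow_m1_S. unfold Rdiv. ring. }
    lra. }
  intros n k Hn [Hk1 Hk2].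
  pose (bn := fun k => Rc k n / (2 * (INR k + lam))).
  pose (Rm1 := fun k => match n with O => 0 | S m => Rc k m end).
  pose (Kn := sum_f_R0 (fun m => bn m * cval lam m) (M + N + 1)).
  assert (Key : forall y, -1 <= y <= 1 ->
     gs lam (fun k => Rc k (S n)) (M + N + 1) y - gs lam Rm1 (M + N + 1) y
     - cval lam n * gs lam (fun k => Rc k 0%nat) (M + N + 1) y
     = 2 * (INR n + lam) * (gs lam (cf bn (M + N + 1)) (S (M + N + 1)) y - Kn)).
  { intros y Hy.
    assert (HI : forall g, (forall x, continuous g x) ->
       ex_RInt (fun t => fM lam M a (y - 1 - t) * g t) (-1) y).
    { intros g Hg. apply ex_cont, cont_conv; auto. apply fM_cont. }
    assert (E1 : gs lam (fun k => Rc k (S n)) (M + N + 1) y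
                 = RInt (fun t => fM lam M a (y - 1 - t) * gegen lam (S n) t) (-1) y).
    { symmetry. apply Hexp; [lia|exact Hy]. }
    assert (E3 : gs lam (fun k => Rc k 0%nat) (M + N + 1) y
                 = RInt (fun t => fM lam M a (y - 1 - t) * gegen lam 0 t) (-1) y).
    { symmetry. apply Hexp; [lia|exact Hy]. }
    assert (E2 : gs lam Rm1 (M + N + 1) y
                 = RInt (fun t => fM lam M a (y - 1 - t) * gm1 lam n t) (-1) y).
    { unfold Rm1. destruct n as [|m].
      - unfold gs. rewrite sum_zero by (intros; ring).
        rewrite (rint_ext _ (fun t => 0 * fM lam M a (y - 1 - t))).
        + rewrite rint_scal; [ring|]. apply ex_cont. intro; apply (ccomp (fM lam M a) (fun t => y - 1 - t)).
          * apply cminus; [apply cconst|apply cid].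
          * apply fM_cont.
        + intro; rewrite gm1_0; ring.
      - rewrite (rint_ext _ (fun t => fM lam M a (y - 1 - t) * gegen lam m t)).
        + symmetry. apply Hexp; [lia|exact Hy].
        + intro; rewrite gm1_S; reflexivity. }
    assert (HF : forall x, continuous (fun t => fM lam M a (y - 1 - t)) x).
    { intro x. apply (ccomp (fM lam M a) (fun t => y - 1 - t)).
      - apply cminus; [apply cconst|apply cid].
      - apply fM_cont. }
    assert (L : @eq R (RInt (fun t => fM lam M a (y - 1 - t) * Ew lam n t) (-1) y)
       (RInt (fun t => fM lam M a (y - 1 - t) * gegen lam (S n) t) (-1) y
        - RInt (fun t => fM lam M a (y - 1 - t) * gm1 lam n t) (-1) y
        - cval lam n * RInt (fun t => fM lam M a (y - 1 - t) * gegen lam 0 t) (-1) y)).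
    { rewrite (rint_ext _ (fun t => (fM lam M a (y - 1 - t) * gegen lam (S n) t
                 - fM lam M a (y - 1 - t) * gm1 lam n t)
                 - cval lam n * (fM lam M a (y - 1 - t) * gegen lam 0 t))).
      2: { intro t. unfold Ew. rewrite geg_0. ring. }
      rewrite rint_minus.
      - rewrite rint_minus by (apply HI; first [apply geg_cont|apply gm1_cont]).
        rewrite rint_scal by (apply HI; apply geg_cont). reflexivity.
      - apply ex_cont. intro x. apply cminus; apply cmult; auto; [apply geg_cont|apply gm1_cont].
      - apply ex_cont. intro x. apply (cmult (fun _ => cval lam n)); [apply cconst|].
        apply cmult; auto. apply geg_cont. }
    rewrite E1, E2, E3, <- L.
    rewrite conv_step by auto.
    rewrite (H_eq lam M a Hlam Hlam0 n (M + N + 1) (fun k => Rc k n)).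
    - rewrite SE_expand'. reflexivity.
    - intros t Ht. apply Hexp; [lia|exact Ht].
    - exact Hy. }
  set (B := (M + N + 1)%nat) in *.
  assert (H0 : forall y, -1 <= y <= 1 ->
     gs lam (fun k => (((Rc k (S n) - Rm1 k) - cval lam n * Rc k 0%nat)
                       - 2 * (INR n + lam) * cf bn B k)
                      + (if Nat.eqb k 0 then 2 * (INR n + lam) * Kn else 0)) (S B) y = 0).
  { intros y Hy.
    rewrite gs_plus_ind, gs_minus, gs_minus, gs_minus, gs_scal, gs_scal.
    rewrite (gs_ext_S lam (fun k => Rc k (S n)) B),
            (gs_ext_S lam Rm1 B), (gs_ext_S lam (fun k => Rc k 0%nat) B).
    - pose proof (Key y Hy). lra.
    - apply Hzero; unfold B in *; lia.
    - unfold Rm1. destruct n as [|m]; [reflexivity|]. apply Hzero; unfold B in *; lia.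
    - apply Hzero; unfold B in *; lia. }
  pose proof (LI_all lam Hlam Hlam0 (S B) _ H0 k ltac:(unfold B in *; lia)) as HL.
  destruct k as [|j]; [lia|]. cbv beta in HL.
  replace (Nat.eqb (S j) 0) with false in HL by reflexivity.
  unfold cf in HL. rewrite leb_t, leb_t in HL by (unfold B in *; lia).
  unfold bn, Rm1 in HL.
  rewrite <- cval_Scoef.
  replace (S j - 1)%nat with j by lia. replace (S j + 1)%nat with (S (S j)) by lia.
  replace (INR (S j) + lam - 1) with (INR j + lam) by (rewrite S_INR; ring).
  replace (INR (S j) + lam + 1) with (INR (S (S j)) + lam) by (rewrite !S_INR; ring).
  assert (Hj1 := lam_ne lam j Hlam Hlam0).
  assert (Hj2 := lam_ne lam (S (S j)) Hlam Hlam0).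
  assert (F1 : 2 * (INR n + lam) * (Rc j n / (2 * (INR j + lam))) = (INR n + lam) / (INR j + lam) * Rc j n)
    by (field; exact Hj1).
  assert (F2 : 2 * (INR n + lam) * (Rc (S (S j)) n / (2 * (INR (S (S j)) + lam)))
             = (INR n + lam) / (INR (S (S j)) + lam) * Rc (S (S j)) n)
    by (field; exact Hj2).
  rewrite Rmult_minus_distr_l, F1, F2 in HL. lra.
Qed.
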